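(* Let $X$ be a finite set and let $K\colon X\times X\to\mathbb{R}$ satisfy $K(y,x)=K(x,y)\geq 0$ and $K(x,x)=0$ for all $x,y\in X$. If $K$ is conditionally strictly negative definite, then there exist a strictly positive definite kernel $A\colon X\times X\to\mathbb{R}$ and a constant $c>0$ such that $K(x,y)=-A(x,y)+c$ for all $x,y\in X$.
   Context: A kernel $K$ on a set $X$ is conditionally strictly negative definite if for every finitely supported $\lambda\colon X\to\mathbb{C}$ with $\lambda\neq 0$ and $\sum_{x\in X}\lambda(x)=0$ one has $\sum_{x,y\in X}\lambda(x)\overline{\lambda(y)}K(x,y)<0$. A hermitian kernel $A$ ($A(x,y)=\overline{A(y,x)}$) is strictly positive definite if for every finitely supported $\lambda\colon X\to\mathbb{C}$ with $\lambda\neq0$ one has $\sum_{x,y\in X}\lambda(x)\overline{\lambda(y)}A(x,y)>0$. *)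

(* Defs.v *)
From HB Require Import structures.
From mathcomp Require Import all_boot all_order all_algebra.
From mathcomp Require Import complex.
From mathcomp Require Import reals.
Set Implicit Arguments. Unset Strict Implicit. Unset Printing Implicit Defensive.
Import Order.TTheory GRing.Theory Num.Theory.
Local Open Scope ring_scope.
Local Open Scope complex_scope.

(* Kernels on a finite set X with real values; coefficients lambda are complex
   (complex R = R[i]); since X is finite every lambda is finitely supported. *)

Definition kquad (R : rcfType) (X : finType) (K : X -> X -> R)
  (lam : X -> R[i]) : R[i] :=
  \sum_(x : X) \sum_(y : X) lam x * (lam y)^* * (K x y)%:C.

Definition cond_strict_neg_def (R : rcfType) (X : finType) (K : X -> X -> R) : Prop :=
  forall lam : X -> R[i], (exists x, lam x != 0) -> \sum_(x : X) lam x = 0 ->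
    kquad K lam < 0.

Definition hermitian_kernel (R : rcfType) (X : finType) (A : X -> X -> R) : Prop :=
  forall x y, ((A x y)%:C : R[i]) = ((A y x)%:C)^*.

Definition strict_pos_def (R : rcfType) (X : finType) (A : X -> X -> R) : Prop :=
  hermitian_kernel A /\
  forall lam : X -> R[i], (exists x, lam x != 0) -> 0 < kquad A lam.

(* Main.v *)
Require Import Defs.
From HB Require Import structures.
From mathcomp Require Import all_boot all_order all_algebra.
From mathcomp Require Import complex.
From mathcomp Require Import reals.
From mathcomp Require Import ring lra.
Import Order.TTheory GRing.Theory Num.Theory.
Local Open Scope ring_scope.
Set Implicit Arguments. Unset Strict Implicit.

Section S.
Variable R : realType.

Lemma riesz_fin (X : finType) (P : X -> X -> R) :
  (forall a : X -> R, (forall x, \sum_y P x y * a y = 0) -> forall x, a x = 0) ->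
  forall k : X -> R, exists v : X -> R, forall x, \sum_y P x y * v y = k x.
Proof.
move=> Pinj k.
pose M := \matrix_(i < #|X|, j < #|X|) P (enum_val j) (enum_val i).
have conv : forall (u : 'rV_#|X|) x,
    (u *m M) 0 (enum_rank x) = \sum_y P x y * u 0 (enum_rank y).
  move=> u x; rewrite !mxE (reindex (@enum_rank X)) /=; last first.
    by apply: onW_bij; apply: enum_rank_bij.
  by apply: eq_bigr => y _; rewrite mxE !enum_rankK mulrC.
have Mfree : row_free M.
  apply: inj_row_free => u uM0; apply/rowP => i.
  have := Pinj (fun y => u 0 (enum_rank y)).
  move=> /(_ _ (enum_val i)); rewrite enum_valK mxE; apply.
  by move=> x; rewrite -conv uM0 mxE.
have Mu : M \in unitmx by rewrite -row_free_unit.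
pose kr := \row_(i < #|X|) k (enum_val i).
exists (fun y => (kr *m invmx M) 0 (enum_rank y)) => x.
by rewrite -conv mulmxKV // mxE enum_rankK.
Qed.


Definition bf (X : finType) (P : X -> X -> R) (a w : X -> R) :=
  \sum_x \sum_y a x * w y * P x y.

Lemma bf_sym (X : finType) (P : X -> X -> R) a w :
  (forall x y, P y x = P x y) -> bf P a w = bf P w a.
Proof.
move=> Ps; rewrite /bf exchange_big; apply: eq_bigr => x _; apply: eq_bigr => y _.
by rewrite Ps mulrAC mulrC mulrA.
Qed.

Lemma bf_exp (X : finType) (P : X -> X -> R) a v t :
  (forall x y, P y x = P x y) ->
  bf P (fun x => a x - t * v x) (fun x => a x - t * v x)
  = bf P a a - 2 * t * bf P a v + t ^+ 2 * bf P v v.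
Proof.
move=> Ps.
have -> : bf P (fun x => a x - t * v x) (fun x => a x - t * v x) =
   bf P a a - t * bf P a v - t * bf P v a + t ^+ 2 * bf P v v.
  rewrite /bf; transitivity (\sum_x \sum_y (a x * a y * P x y - t * (a x * v y * P x y)
     - t * (v x * a y * P x y) + t ^+ 2 * (v x * v y * P x y))).
    by apply: eq_bigr => x _; apply: eq_bigr => y _; ring.
  under eq_bigr => x _ do rewrite big_split /= !sumrB -!mulr_sumr.
  by rewrite big_split /= !sumrB -!mulr_sumr.
by rewrite (bf_sym a v Ps); ring.
Qed.

Lemma bf_psd (X : finType) (P : X -> X -> R) :
  (forall a : X -> R, (exists x, a x != 0) -> 0 < bf P a a) ->
  forall a, 0 <= bf P a a.
Proof.
move=> PD a; case: (boolP [exists x, a x != 0]) => [/existsP/PD/ltW//|na].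
rewrite /bf big1 // => x _; rewrite big1 // => y _.
have -> : a x = 0 by apply/eqP; apply/negPn/negP => h; move/negP: na; apply; apply/existsP; exists x.
by rewrite !mul0r.
Qed.

Lemma bf_lin (X : finType) (P : X -> X -> R) a w :
  bf P a w = \sum_x a x * \sum_y P x y * w y.
Proof.
rewrite /bf; apply: eq_bigr => x _; rewrite mulr_sumr; apply: eq_bigr => y _.
by rewrite -mulrA [P x y * _]mulrC.
Qed.

Lemma key (X : finType) (P : X -> X -> R) :
  (forall x y, P y x = P x y) ->
  (forall a : X -> R, (exists x, a x != 0) -> 0 < bf P a a) ->
  forall k : X -> R, exists C, 0 < C /\
    forall a, (\sum_x a x * k x) ^+ 2 <= C * bf P a a.
Proof.
move=> Ps PD k.
have [v Hv] : exists v : X -> R, forall x, \sum_y P x y * v y = k x.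
  apply: riesz_fin => a Ha x; apply/eqP/negPn/negP => ax.
  have := PD a (ex_intro _ x ax).
  rewrite bf_lin big1 ?ltxx // => z _; by rewrite Ha mulr0.
have psd := bf_psd PD.
exists (bf P v v + 1); split; first by have := psd v; lra.
move=> a.
have -> : \sum_x a x * k x = bf P a v by rewrite bf_lin; apply: eq_bigr => x _; rewrite Hv.
have CS : bf P a v ^+ 2 <= bf P v v * bf P a a.
  case: (boolP [exists x, v x != 0]) => [/existsP/PD vpos|nv].
    pose t := bf P a v / bf P v v.
    have ht : t * bf P v v = bf P a v by rewrite /t divfK // gt_eqF.
    have := psd (fun x => a x - t * v x); rewrite bf_exp // => h.
    have h2 : 0 <= bf P a a - t * bf P a v by nra.
    have := mulr_ge0 (ltW vpos) h2.
    rewrite mulrBr mulrA [bf P v v * t]mulrC ht => h3.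
    by rewrite expr2; lra.
  have -> : bf P a v = 0.
    rewrite /bf big1 // => x _; rewrite big1 // => y _.
    have -> : v y = 0 by apply/eqP; apply/negPn/negP => h; move/negP: nv; apply; apply/existsP; exists y.
    by rewrite mulr0 mul0r.
  by rewrite expr0n /= mulr_ge0 // ?psd.
have := psd a; nra.
Qed.

Lemma sum_e0 (X : finType) (x0 : X) (F : X -> R) :
  \sum_y F y * (y == x0)%:R = F x0.
Proof.
rewrite (bigD1 x0) //= eqxx mulr1 big1 ?addr0 // => y /negbTE ->.
by rewrite mulr0.
Qed.

Lemma real_main (X : finType) (K : X -> X -> R)
  (Ksym : forall x y, K y x = K x y) (Kdiag : forall x, K x x = 0) :
  (forall a : X -> R, (exists x, a x != 0) -> \sum_x a x = 0 -> bf K a a < 0) ->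
  exists c, 0 < c /\ forall a : X -> R, (exists x, a x != 0) ->
     0 < c * (\sum_x a x) ^+ 2 - bf K a a.
Proof.
move=> hyp.
case: (pickP (fun _ : X => true)) => [x0 _|none]; last first.
  by exists 1; split => // a [x]; have := none x.
pose k x := K x x0.
pose K' x y := K x y - K x x0 - K x0 y.
pose P x y := 1 - K' x y.
have K's : forall x y, K' y x = K' x y.
  by move=> x y; rewrite /K' Ksym (Ksym x0 x) (Ksym y x0); ring.
have Ps : forall x y, P y x = P x y by move=> x y; rewrite /P K's.
have F1 : forall a : X -> R, bf K a a = bf K' a a + 2 * (\sum_x a x) * (\sum_x a x * k x).
  move=> a.
  have e1 : bf K' a a = bf K a a - bf (fun x y => K x x0) a a - bf (fun x y => K x0 y) a a.
    rewrite /bf -!sumrB; apply: eq_bigr => x _; rewrite -!sumrB; apply: eq_bigr => y _.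
    rewrite /K'; ring.
  have e2 : bf (fun x y => K x x0) a a = (\sum_x a x) * (\sum_x a x * k x).
    rewrite mulrC /bf mulr_suml; apply: eq_bigr => x _; rewrite mulr_sumr.
    by apply: eq_bigr => y _; rewrite /k; ring.
  have e3 : bf (fun x y => K x0 y) a a = (\sum_x a x) * (\sum_x a x * k x).
    rewrite /bf mulr_suml; apply: eq_bigr => x _; rewrite mulr_sumr.
    by apply: eq_bigr => y _; rewrite /k Ksym; ring.
  rewrite e1 e2 e3; ring.
have F2 : forall a : X -> R, bf P a a = (\sum_x a x) ^+ 2 - bf K' a a.
  move=> a.
  have -> : (\sum_x a x) ^+ 2 = bf (fun _ _ => 1) a a.
    rewrite expr2 /bf mulr_suml; apply: eq_bigr => x _; rewrite mulr_sumr.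
    by apply: eq_bigr => y _; rewrite mulr1.
  rewrite /bf -!sumrB; apply: eq_bigr => x _; rewrite -!sumrB; apply: eq_bigr => y _.
  rewrite /P; ring.
pose e0 x : R := (x == x0)%:R.
have K'e0 : forall a, bf K' a e0 = 0.
  move=> a; rewrite bf_lin big1 // => x _; rewrite sum_e0 /K' Kdiag; rewrite -[X in _ * X]/(K x x0 - K x x0 - 0).
  by rewrite subrr subr0 mulr0.
have F3 : forall a : X -> R, bf K' a a <= 0.
  move=> a; set s := \sum_x a x.
  pose pa x := a x - s * e0 x.
  have spa : \sum_x pa x = 0.
    rewrite /pa sumrB -mulr_sumr.
    have -> : \sum_x e0 x = 1.
      by rewrite -(sum_e0 x0 (fun _ => 1)); apply: eq_bigr => y _; rewrite mul1r.
    by rewrite mulr1 subrr.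
  have E : bf K' a a = bf K pa pa.
    rewrite F1 spa mulr0 mul0r addr0 /pa bf_exp // !K'e0; ring.
  rewrite E; case: (boolP [exists x, pa x != 0]) => [/existsP h|nv].
    by apply: ltW; apply: hyp.
  rewrite /bf big1 // => x _; rewrite big1 // => y _.
  have -> : pa y = 0.
    by apply/eqP; apply/negPn/negP => h; move/negP: nv; apply; apply/existsP; exists y.
  by rewrite mulr0 mul0r.
have PD : forall a : X -> R, (exists x, a x != 0) -> 0 < bf P a a.
  move=> a ha; rewrite F2.
  case: (eqVneq (\sum_x a x) 0) => [s0|s0].
    have := hyp a ha s0; rewrite F1 s0 mulr0 mul0r addr0 => h.
    by rewrite expr0n /= sub0r oppr_gt0.
  have := F3 a; have : 0 < (\sum_x a x) ^+ 2 by rewrite exprn_even_gt0.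
  lra.
have [C [C0 HC]] := key Ps PD k.
exists (2 + 2 * C); split; first lra.
move=> a ha; rewrite F1.
have := HC a; have := PD a ha; have := F2 a.
set s := \sum_x a x; set L := \sum_x a x * k x; set p := bf P a a; set q := bf K' a a.
move=> hp pp hL.
have hq : q = s ^+ 2 - p by rewrite hp; ring.
rewrite hq.
have h1 : 0 <= (2 * C * s - L) ^+ 2 by apply: sqr_ge0.
have h2 : 0 <= s ^+ 2 by apply: sqr_ge0.
have h3 : 0 < 2 * C * ((2 + 2 * C) * s ^+ 2 - (s ^+ 2 - p + 2 * s * L)).
  have -> : 2 * C * ((2 + 2 * C) * s ^+ 2 - (s ^+ 2 - p + 2 * s * L)) =
     2 * C * s ^+ 2 + (2 * C * s - L) ^+ 2 - L ^+ 2 + 2 * C * p by ring.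
  have : 0 < C * p by apply: mulr_gt0.
  have : 0 <= C * s ^+ 2 by apply: mulr_ge0 => //; apply: ltW.
  lra.
by move: h3; rewrite pmulr_rgt0 // mulr_gt0.
Qed.
End S.

Local Open Scope complex_scope.

Lemma term (R : realType) (u v w z m : R) :
  (u +i* v) * (w +i* z)^* * m%:C = ((u * w + v * z) * m) +i* ((v * w - u * z) * m).
Proof.
simpc. apply/eqP; rewrite eq_complex /=; apply/andP; split; apply/eqP; ring.
Qed.

Lemma sumC (R : realType) (X : finType) (F : X -> R[i]) :
  \sum_x F x = (\sum_x complex.Re (F x)) +i* (\sum_x complex.Im (F x)).
Proof.
rewrite /index_enum; elim: (Finite.enum X) => [|i s IH]; first by rewrite !big_nil.
rewrite !big_cons IH; case: (F i) => p q; simpc; by [].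
Qed.

Lemma kq_real (R : realType) (X : finType) (M : X -> X -> R) (a : X -> R) :
  kquad M (fun x => (a x)%:C) = (bf M a a)%:C.
Proof.
rewrite /kquad /bf rmorph_sum; apply: eq_bigr => x _.
rewrite rmorph_sum; apply: eq_bigr => y _.
change ((a x +i* 0) * (a y +i* 0)^* * (M x y)%:C = (a x * a y * M x y) +i* 0).
rewrite term; apply/eqP; rewrite eq_complex /=; apply/andP; split; apply/eqP; ring.
Qed.

Lemma kq_decomp (R : realType) (X : finType) (M : X -> X -> R) (lam : X -> R[i]) :
  (forall x y, M y x = M x y) ->
  kquad M lam = (bf M (fun x => complex.Re (lam x)) (fun x => complex.Re (lam x))
               + bf M (fun x => complex.Im (lam x)) (fun x => complex.Im (lam x)))%:C.
Proof.
move=> Ms.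
set a := fun x => complex.Re (lam x); set b := fun x => complex.Im (lam x).
have lamE : forall x, lam x = a x +i* b x by move=> x; rewrite /a /b; case: (lam x).
rewrite /kquad.
under eq_bigr => x _ do under eq_bigr => y _ do rewrite !lamE term.
under eq_bigr => x _ do rewrite sumC.
rewrite sumC /=.
apply/eqP; rewrite eq_complex /=; apply/andP; split; apply/eqP.
  rewrite /bf -big_split; apply: eq_bigr => x _; rewrite -big_split.
  by apply: eq_bigr => y _ /=; ring.
transitivity (bf M b a - bf M a b); last by rewrite (bf_sym b a Ms) subrr.
rewrite /bf -sumrB; apply: eq_bigr => x _; rewrite -sumrB.
by apply: eq_bigr => y _ /=; ring.
Qed.

Theorem theorem1 (R : realType) (X : finType) (K : X -> X -> R)
  (Ksym : forall x y, K y x = K x y)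
  (Knn : forall x y, 0 <= K x y)
  (Kdiag : forall x, K x x = 0) :
  cond_strict_neg_def K ->
  exists (A : X -> X -> R) (c : R),
    strict_pos_def A /\ 0 < c /\ forall x y, K x y = - A x y + c.
Proof.
move=> hyp.
have hreal : forall a : X -> R, (exists x, a x != 0) -> \sum_x a x = 0 -> bf K a a < 0.
  move=> a [x ax] s0.
  have h1 : exists y, (fun z => (a z)%:C) y != 0 :> R[i].
    by exists x; apply: contra_neq ax => -[].
  have h2 : \sum_y (fun z => (a z)%:C) y = 0 :> R[i].
    by rewrite -rmorph_sum s0.
  by have := hyp _ h1 h2; rewrite kq_real ltcE /= => /andP[].
have [c [c0 Hc]] := real_main Ksym Kdiag hreal.
pose A x y := c - K x y.
have As : forall x y, A y x = A x y by move=> x y; rewrite /A Ksym.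
have bfA : forall a : X -> R, bf A a a = c * (\sum_x a x) ^+ 2 - bf K a a.
  move=> a.
  have -> : c * (\sum_x a x) ^+ 2 = bf (fun _ _ => c) a a.
    rewrite expr2 mulrA [c * _]mulr_sumr mulr_suml /bf; apply: eq_bigr => x _.
    rewrite mulr_sumr; apply: eq_bigr => y _; ring.
  rewrite /bf -!sumrB; apply: eq_bigr => x _; rewrite -!sumrB; apply: eq_bigr => y _.
  rewrite /A; ring.
have PDA : forall a : X -> R, (exists x, a x != 0) -> 0 < bf A a a.
  by move=> a ha; rewrite bfA; apply: Hc.
have psd := bf_psd PDA.
exists A, c; split; last split => //.
  split.
    by move=> x y; rewrite conjc_real As.
  move=> lam [x lx]; rewrite kq_decomp // ltcE /=; apply/andP; split => //.
  have ha := psd (fun x => complex.Re (lam x)).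
  have hb := psd (fun x => complex.Im (lam x)).
  have : complex.Re (lam x) != 0 \/ complex.Im (lam x) != 0.
    move: lx; case: (lam x) => p q /=.
    case: (eqVneq p 0) => [->|]; last by left.
    case: (eqVneq q 0) => [->|]; last by right.
    by rewrite eqxx.
  case=> h.
    have := PDA (fun x => complex.Re (lam x)) (ex_intro _ x h); lra.
  have := PDA (fun x => complex.Im (lam x)) (ex_intro _ x h); lra.
by move=> x y; rewrite /A; ring.
Qed.
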